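(* Let $\alpha>0$, $n\ge 3$. Let $w$ solve \[ w''+\frac{n-1}{t}w'+t^{\alpha}e^{w}=0,\qquad w(0)=0,\quad w'(0)=0, \] let $w_0(t)=\ln\bigl((2+\alpha)(n-2)\bigr)-(2+\alpha)\ln t$, and set $p(t)=w(t)-w_0(t)$. Let $t_0\in(0,\infty)$ and let $z$ be the solution of the Euler equation \[ z''+\frac{n-1}{t}z'+\frac{(2+\alpha)(n-2)}{t^2}z=0 \] with $z(t_0)=p(t_0)$ and $z'(t_0)=p'(t_0)$. If $z(t)<0$ on $(t_0,\infty)$, then $p(t)<0$ on $(t_0,\infty)$.
   Context: The solution $w$ is defined for all $t>0$. The function $w_0$ solves the same differential equation as $w$ for $t>0$. *)

(* Defs.v *)
From Stdlib Require Import Reals.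
From Coquelicot Require Import Coquelicot.
Open Scope R_scope.

Definition w0 (alpha : R) (n : nat) (t : R) : R :=
  ln ((2 + alpha) * (INR n - 2)) - (2 + alpha) * ln t.

(* Main.v *)
Require Import Defs.
From Stdlib Require Import Reals.
From Coquelicot Require Import Coquelicot.
From Stdlib Require Import Lra Psatz.
Open Scope R_scope.

Lemma D_plus f g x a b : is_derive f x a -> is_derive g x b ->
  is_derive (fun t => f t + g t) x (a + b).
Proof. intros H1 H2. exact (is_derive_plus _ _ _ _ _ H1 H2). Qed.
Lemma D_minus f g x a b : is_derive f x a -> is_derive g x b ->
  is_derive (fun t => f t - g t) x (a - b).
Proof. intros H1 H2. exact (is_derive_minus _ _ _ _ _ H1 H2). Qed.
Lemma D_mult f g x a b : is_derive f x a -> is_derive g x b ->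
  is_derive (fun t => f t * g t) x (a * g x + f x * b).
Proof. intros H1 H2. exact (is_derive_mult _ _ _ _ _ H1 H2 Rmult_comm). Qed.
Lemma D_eq (f : R -> R) (x l l2 : R) : is_derive f x l -> l = l2 -> is_derive f x l2.
Proof. intros H ->; exact H. Qed.
Lemma D_cst (c x : R) : is_derive (fun _ => c) x 0.
Proof. exact (is_derive_const (K:=R_AbsRing) c x). Qed.
Lemma D_id (x : R) : is_derive (fun t => t) x 1.
Proof. exact (is_derive_id (K:=R_AbsRing) x). Qed.

Lemma mono f df a b : a <= b ->
  (forall x, a <= x <= b -> is_derive f x (df x)) ->
  (forall x, a <= x <= b -> 0 <= df x) -> f a <= f b.
Proof.
  intros Hab Hd Hp.
  destruct (MVT_gen f a b df) as [c [Hc Heq]].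
  - intros x Hx. rewrite Rmin_left in Hx by lra. rewrite Rmax_right in Hx by lra.
    apply Hd; lra.
  - intros x Hx. rewrite Rmin_left in Hx by lra. rewrite Rmax_right in Hx by lra.
    apply derivable_continuous_pt. exists (df x). apply is_derive_Reals, Hd; lra.
  - rewrite Rmin_left in Hc by lra. rewrite Rmax_right in Hc by lra.
    assert (0 <= df c) by (apply Hp; lra).
    assert (0 <= df c * (b - a)) by (apply Rmult_le_pos; lra). lra.
Qed.

Lemma deriv_neg_right f x l : is_derive f x l -> l < 0 ->
  forall d, 0 < d -> exists s, x < s < x + d /\ f s < f x.
Proof.
  intros H Hl d Hd. apply is_derive_Reals in H.
  destruct (H (- l / 2)) as [del Hdel]; [lra|].
  set (h := Rmin (del / 2) (d / 2)).
  assert (Hh0 : 0 < h) by (unfold h; apply Rmin_pos; destruct del; simpl; lra).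
  assert (Hh1 : h < del) by (unfold h; pose proof (Rmin_l (del/2) (d/2)); destruct del; simpl in *; lra).
  assert (Hh2 : h < d) by (unfold h; pose proof (Rmin_r (del/2) (d/2)); lra).
  exists (x + h). split; [lra|].
  specialize (Hdel h ltac:(lra) ltac:(rewrite Rabs_pos_eq; lra)).
  apply Rabs_def2 in Hdel. destruct Hdel as [Ha Hb].
  assert (Hq : (f (x + h) - f x) / h < l / 2) by lra.
  apply Rmult_lt_compat_r with (r := h) in Hq; [|lra].
  unfold Rdiv in Hq. rewrite Rmult_assoc, Rinv_l in Hq by lra.
  assert (l / 2 * h < 0) by nra. lra.
Qed.

Lemma cont_neg_right f x l : is_derive f x l -> f x < 0 ->
  forall d, 0 < d -> exists s, x < s < x + d /\ f s < 0.
Proof.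
  intros H Hf d Hd.
  assert (Hc : continuity_pt f x).
  { apply derivable_continuous_pt. exists l. apply is_derive_Reals, H. }
  destruct (Hc (- f x)) as [al [Hal Hc2]]; [lra|].
  exists (x + Rmin (al/2) (d/2)).
  pose proof (Rmin_l (al/2) (d/2)). pose proof (Rmin_r (al/2) (d/2)).
  assert (0 < Rmin (al/2) (d/2)) by (apply Rmin_pos; lra).
  split; [lra|].
  specialize (Hc2 (x + Rmin (al/2) (d/2))).
  simpl in Hc2. unfold R_dist in Hc2.
  assert (Rabs (f (x + Rmin (al / 2) (d / 2)) - f x) < - f x).
  { apply Hc2. split. { unfold D_x, no_cond. split; auto. lra. }
    replace (x + Rmin (al / 2) (d / 2) - x) with (Rmin (al / 2) (d / 2)) by ring.
    rewrite Rabs_pos_eq; lra. }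
  apply Rabs_def2 in H3. lra.
Qed.
Lemma dexpC (C : R) (x : R) : is_derive (fun t => exp (-C*t)) x (-C * exp(-C*x)).
Proof. auto_derive; [auto | ring]. Qed.
Lemma aux a b d C : -C <= d <= C -> 2*a*b*d <= C*(a*a+b*b).
Proof. intros. destruct (Rle_or_lt 0 d).
 - assert (2*a*b <= a*a+b*b) by (pose proof (pow2_ge_0 (a-b)); nra).
   assert (2*a*b*d <= (a*a+b*b)*d) by (apply Rmult_le_compat_r; lra).
   assert ((a*a+b*b)*d <= (a*a+b*b)*C) by (apply Rmult_le_compat_l; nra). nra.
 - assert (-(2*a*b) <= a*a+b*b) by (pose proof (pow2_ge_0 (a+b)); nra).
   assert (-(2*a*b)*(-d) <= (a*a+b*b)*(-d)) by (apply Rmult_le_compat_r; lra).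
   assert ((a*a+b*b)*(-d) <= (a*a+b*b)*C) by (apply Rmult_le_compat_l; nra). nra. Qed.
Lemma idt (alpha K t p : R) : 0 < t -> 0 < K ->
  Rpower t alpha * exp (p + (ln K - (2 + alpha) * ln t)) = K * exp p / t ^ 2.
Proof. intros Ht HK. unfold Rpower. rewrite !exp_plus.
  unfold Rminus. rewrite exp_plus, exp_ln by auto.
  replace (- ((2 + alpha) * ln t)) with (- (alpha * ln t) + -(ln t + ln t)) by ring.
  rewrite exp_plus, !exp_Ropp, exp_plus, exp_ln by auto.
  field. split; [lra|]. apply Rgt_not_eq, exp_pos. Qed.
Theorem lemma3p5
  (alpha : R) (n : nat) (w w1 w2 z z1 z2 : R -> R) (t0 : R)
  (Halpha : 0 < alpha) (Hn : (3 <= n)%nat)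
  (* w is a solution defined for all t > 0, with w' = w1, w'' = w2 *)
  (Hw1 : forall t, 0 < t -> is_derive w t (w1 t))
  (Hw2 : forall t, 0 < t -> is_derive w1 t (w2 t))
  (Hode : forall t, 0 < t ->
     w2 t + (INR n - 1) / t * w1 t + Rpower t alpha * exp (w t) = 0)
  (* initial conditions w(0) = 0, w'(0) = 0 (as right limits at 0) *)
  (Hw0 : filterlim w (at_right 0) (locally 0))
  (Hw10 : filterlim w1 (at_right 0) (locally 0))
  (Ht0 : 0 < t0)
  (* z solves the Euler equation on (0, oo) *)
  (Hz1 : forall t, 0 < t -> is_derive z t (z1 t))
  (Hz2 : forall t, 0 < t -> is_derive z1 t (z2 t))
  (Hzode : forall t, 0 < t ->
     z2 t + (INR n - 1) / t * z1 t
       + (2 + alpha) * (INR n - 2) / (t ^ 2) * z t = 0)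
  (* z(t0) = p(t0), z'(t0) = p'(t0), where p = w - w0, w0'(t) = -(2+alpha)/t *)
  (Hzt0 : z t0 = w t0 - w0 alpha n t0)
  (Hz1t0 : z1 t0 = w1 t0 + (2 + alpha) / t0)
  (Hzneg : forall t, t0 < t -> z t < 0) :
  forall t, t0 < t -> w t - w0 alpha n t < 0.
Proof.
  destruct n as [|[|[|k]]]; try lia.
  assert (Em : INR (S (S (S k))) = INR k + 3) by (rewrite !S_INR; ring).
  rewrite Em in Hode, Hzode. unfold w0 in *. rewrite Em in *.
  set (K := (2 + alpha) * (INR k + 3 - 2)).
  assert (HK : 0 < K) by (unfold K; pose proof (pos_INR k); nra).
  set (m := INR k + 3 - 1).
  assert (Hm : 0 < m) by (unfold m; pose proof (pos_INR k); lra).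
  fold K in Hzode. fold m in Hode, Hzode. fold K in Hzt0.
  set (q := fun t => w t - (ln K - (2 + alpha) * ln t) - z t).
  set (q1 := fun t => w1 t + (2 + alpha) / t - z1 t).
  set (q2 := fun t => w2 t - (2 + alpha) / t ^ 2 - z2 t).
  assert (Dq : forall t, 0 < t -> is_derive q t (q1 t)).
  { intros t Ht. unfold q, q1. eapply D_eq.
    - apply (D_minus (fun t => w t - (ln K - (2 + alpha) * ln t)) z).
      + apply (D_minus w (fun t => ln K - (2 + alpha) * ln t)); [apply Hw1; auto|].
        apply (D_minus (fun _ => ln K) (fun t => (2 + alpha) * ln t)); [apply D_cst|].
        apply is_derive_scal, is_derive_ln; auto.
      + apply Hz1; auto.
    - simpl. field. lra. }
  assert (Dq1 : forall t, 0 < t -> is_derive q1 t (q2 t)).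
  { intros t Ht. unfold q1, q2. eapply D_eq.
    - apply (D_minus (fun t => w1 t + (2 + alpha) / t) z1).
      + apply (D_plus w1 (fun t => (2 + alpha) / t)); [apply Hw2; auto|].
        apply is_derive_scal, is_derive_inv; [apply D_id | lra].
      + apply Hz2; auto.
    - simpl. field. lra. }
  assert (Hq0 : q t0 = 0) by (unfold q; lra).
  assert (Hq10 : q1 t0 = 0) by (unfold q1; lra).
  assert (Dmz : forall t, 0 < t -> is_derive (fun t => -1 * z t) t (-1 * z1 t)).
  { intros t Ht. apply is_derive_scal; auto. }
  assert (Hzt0le : z t0 <= 0).
  { destruct (Rle_or_lt (z t0) 0) as [H|H]; auto.
    destruct (cont_neg_right _ t0 _ (Dmz t0 Ht0) ltac:(lra) 1 ltac:(lra)) as [s [Hs Hs2]].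
    specialize (Hzneg s ltac:(lra)). lra. }
  assert (Hzle : forall t, t0 <= t -> z t <= 0).
  { intros t Ht. destruct (Rle_lt_or_eq_dec _ _ Ht) as [H|H].
    - specialize (Hzneg t H); lra.
    - subst; auto. }
  set (W := fun t => q1 t * z t - q t * z1 t).
  assert (HW : forall t, t0 <= t -> 0 <= W t).
  { intros t Ht.
    set (phi := fun t => t ^ (S (S k)) * W t).
    set (dphi := fun t => INR (S (S k)) * 1 * t ^ (S k) * W t
                 + t ^ (S (S k)) * ((q2 t * z t + q1 t * z1 t) - (q1 t * z1 t + q t * z2 t))).
    assert (Hmono : phi t0 <= phi t).
    { apply (mono phi dphi); auto.
      - intros x Hx. unfold phi, dphi. apply D_mult.
        + apply (is_derive_pow (fun t => t) (S (S k)) x 1). apply D_id.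
        + unfold W. apply D_minus; apply D_mult; auto; try apply Dq1; try apply Dq; try apply Hz1; try apply Hz2; lra.
      - intros x Hx. assert (Hx0 : 0 < x) by lra.
        assert (Hid : dphi x = x ^ S k * x * z x * (K / x ^ 2) * (1 + (w x - (ln K - (2 + alpha) * ln x)) - exp (w x - (ln K - (2 + alpha) * ln x)))).
        { unfold dphi, q, q1, q2.
          assert (Ew2 : w2 x = - (m / x * w1 x) - Rpower x alpha * exp (w x)).
          { specialize (Hode x Hx0). lra. }
          assert (Ez2 : z2 x = - (m / x * z1 x) - K / x ^ 2 * z x).
          { specialize (Hzode x Hx0). lra. }
          rewrite Ew2, Ez2.
          assert (Eid : Rpower x alpha * exp (w x) = K * exp (w x - (ln K - (2 + alpha) * ln x)) / x ^ 2).
          { rewrite <- (idt alpha K x) by auto. f_equal. f_equal. ring. }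
          rewrite Eid.
          unfold m, W, q, q1. set (P := w x - (ln K - (2 + alpha) * ln x)). unfold K. rewrite !S_INR. simpl. generalize (x ^ k); intro xk. field. lra. }
        rewrite Hid.
        pose proof (exp_ineq1_le (w x - (ln K - (2 + alpha) * ln x))).
        pose proof (Hzle x ltac:(lra)).
        assert (0 < x ^ S k * x * (K / x ^ 2)).
        { apply Rmult_lt_0_compat; [apply Rmult_lt_0_compat; [apply pow_lt|]|]; try lra.
          apply Rdiv_lt_0_compat; [lra | apply pow_lt; lra]. }
        set (A := x ^ S k * x * (K / x ^ 2)) in *.
        set (B := 1 + (w x - (ln K - (2 + alpha) * ln x)) - exp (w x - (ln K - (2 + alpha) * ln x))) in *.
        assert (B <= 0) by (unfold B; lra). assert (0 <= z x * B) by nra.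
        replace (x ^ S k * x * z x * (K / x ^ 2) * B) with (A * (z x * B)) by (unfold A; ring).
        apply Rmult_le_pos; lra. }
    unfold phi, W in Hmono. rewrite Hq0, Hq10 in Hmono.
    assert (0 < t ^ S (S k)) by (apply pow_lt; lra).
    fold (W t) in Hmono. nra. }
  intros t1 Ht1.
  destruct (Rle_or_lt (q t1) 0) as [Hq|Hq].
  { specialize (Hzneg t1 Ht1). unfold q in Hq. lra. }
  exfalso.
  pose proof (Hzneg t1 Ht1) as Hzt1.
  set (c := q t1 / (- z t1)).
  assert (Hc : 0 < c) by (unfold c; apply Rdiv_lt_0_compat; lra).
  set (h := fun t => q t + c * z t).
  assert (Dh : forall t, 0 < t -> is_derive h t (q1 t + c * z1 t)).
  { intros t Ht. unfold h. apply D_plus; [apply Dq; auto|]. apply is_derive_scal; auto. }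
  assert (Hh : forall s, t0 < s < t1 -> 0 <= h s).
  { intros s Hs.
    assert (Hm2 : h s / z s <= h t1 / z t1).
    { apply (mono (fun t => h t / z t) (fun t => ((q1 t + c * z1 t) * z t - h t * z1 t) / z t ^ 2)).
      - lra.
      - intros x Hx. apply is_derive_div; [apply Dh; lra | apply Hz1; lra |].
        specialize (Hzneg x ltac:(lra)). lra.
      - intros x Hx. specialize (Hzneg x ltac:(lra)).
        replace ((q1 x + c * z1 x) * z x - h x * z1 x) with (W x) by (unfold W, h; ring).
        assert (0 < z x ^ 2) by (simpl; nra). apply Rdiv_le_0_compat; [apply HW; lra | lra]. }
    assert (Hht1 : h t1 / z t1 = 0).
    { unfold h, c. field. lra. }
    rewrite Hht1 in Hm2. specialize (Hzneg s ltac:(lra)).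
    replace (h s) with ((h s / z s) * z s) by (field; lra). nra. }
  destruct (Rle_lt_or_eq_dec _ _ Hzt0le) as [Hlt|Heq].
  - assert (Hh0 : h t0 < 0) by (unfold h; rewrite Hq0; nra).
    destruct (cont_neg_right _ t0 _ (Dh t0 Ht0) Hh0 (t1 - t0) ltac:(lra)) as [s [Hs Hs2]].
    specialize (Hh s ltac:(lra)). lra.
  - (* z t0 = 0: z1 t0 <> 0 by uniqueness *)
    assert (Hne : z1 t0 <> 0).
    { intro H0.
      set (C := 1 + K / t0 ^ 2).
      set (F := fun t => - ((z t * z t + z1 t * z1 t) * exp (- C * t))).
      assert (HF : F t0 <= F (t0 + 1)).
      { apply (mono F (fun t => - (((z1 t * z t + z t * z1 t) + (z2 t * z1 t + z1 t * z2 t)) * exp (- C * t)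
                  + (z t * z t + z1 t * z1 t) * (- C * exp (- C * t))))).
        - lra.
        - intros x Hx. unfold F.
          apply (is_derive_opp (fun t => (z t * z t + z1 t * z1 t) * exp (- C * t))).
          apply (D_mult (fun t => z t * z t + z1 t * z1 t) (fun t => exp (- C * t))); [|apply dexpC].
          apply (D_plus (fun t => z t * z t) (fun t => z1 t * z1 t)).
          + apply (D_mult z z); apply Hz1; lra.
          + apply (D_mult z1 z1); apply Hz2; lra.
        - intros x Hx. assert (Hx0 : 0 < x) by lra.
          assert (Ez2 : z2 x = - (m / x * z1 x) - K / x ^ 2 * z x).
          { specialize (Hzode x Hx0). lra. }
          rewrite Ez2.
          assert (HKx : 0 < K / x ^ 2 <= K / t0 ^ 2).
          { split. apply Rdiv_lt_0_compat; [lra | apply pow_lt; lra].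
            apply Rmult_le_compat_l; [lra|]. apply Rinv_le_contravar. apply pow_lt; lra.
            apply pow_incr; lra. }
          pose proof (aux (z x) (z1 x) (1 - K / x ^ 2) C ltac:(unfold C; lra)).
          assert (0 <= m / x * (z1 x * z1 x)).
          { apply Rmult_le_pos. apply Rdiv_le_0_compat; lra. nra. }
          pose proof (exp_pos (- C * x)).
          set (e := exp (- C * x)) in *.
          assert (Hneg : 2 * z x * z1 x * (1 - K / x ^ 2) - 2 * (m / x * (z1 x * z1 x)) - C * (z x * z x + z1 x * z1 x) <= 0) by lra.
          replace (- ((z1 x * z x + z x * z1 x + ((- (m / x * z1 x) - K / x ^ 2 * z x) * z1 x + z1 x * (- (m / x * z1 x) - K / x ^ 2 * z x))) * e +
                     (z x * z x + z1 x * z1 x) * (- C * e)))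
            with (- (e * (2 * z x * z1 x * (1 - K / x ^ 2) - 2 * (m / x * (z1 x * z1 x)) - C * (z x * z x + z1 x * z1 x)))) by ring.
          nra. }
      unfold F in HF. rewrite Heq, H0 in HF.
      pose proof (Hzneg (t0 + 1) ltac:(lra)).
      pose proof (exp_pos (- C * (t0 + 1))).
      assert (0 < (z (t0 + 1) * z (t0 + 1) + z1 (t0 + 1) * z1 (t0 + 1)) * exp (- C * (t0 + 1))).
      { apply Rmult_lt_0_compat; [nra | lra]. }
      lra. }
    assert (Hz1neg : z1 t0 < 0).
    { destruct (Rle_or_lt (z1 t0) 0) as [H|H]; [lra|].
      destruct (deriv_neg_right _ t0 _ (Dmz t0 Ht0) ltac:(lra) 1 ltac:(lra)) as [s [Hs Hs2]].
      specialize (Hzneg s ltac:(lra)). lra. }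
    destruct (deriv_neg_right _ t0 _ (Dh t0 Ht0) ltac:(rewrite Hq10; nra) (t1 - t0) ltac:(lra)) as [s [Hs Hs2]].
    specialize (Hh s ltac:(lra)). unfold h in Hs2 at 2. rewrite Hq0, Heq in Hs2. lra.
Qed.
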